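(* Every good set is a basis of $\mathbb R^{2k}$.
   Context: Let $k\ge2$, $n=2k-1$. Let $e_1,\dots,e_k$ be the standard basis of $\mathbb R^k$ and for $r\in\mathbb R$ let $r_{(k)}=(r,\dots,r)\in\mathbb R^k$. For $j=1,\dots,k$ define points of $\mathbb R^{2k}=\mathbb R^k\times\mathbb R^k$: $A_j=(e_j,0_{(k)})$, $B_j=\frac{1}{2n}(2_{(k)}-e_j,\,2_{(k)}-e_j)$, $C_j=(0_{(k)},e_j)$. Let $A=\{A_j\}$, $B=\{B_j\}$, $C=\{C_j\}$, $X=A\cup B\cup C$. A subset $S\subset X$ with $2k$ elements is good if it contains no set of the form $\{A_j,B_j,C_j\}$ and $S\neq A\cup C$. *)

(* Defs.v *)
From HB Require Import structures.
From mathcomp Require Import all_boot all_order all_algebra.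
Set Implicit Arguments. Unset Strict Implicit. Unset Printing Implicit Defensive.
Import Order.TTheory GRing.Theory Num.Theory.
Local Open Scope ring_scope.

(* Labels: (0, j) = A_j, (1, j) = B_j, (2, j) = C_j. *)
Definition label (k : nat) := ('I_3 * 'I_k)%type.

Definition e_ (R : realFieldType) (k : nat) (j : 'I_k) : 'rV[R]_k := delta_mx 0 j.

Definition point (R : realFieldType) (k : nat) (l : label k) : 'rV[R]_(k + k) :=
  let j := l.2 in
  let n := (2 * k - 1)%N in
  match val l.1 with
  | 0%N => row_mx (e_ R j) 0
  | 1%N => (2 * n%:R)^-1 *: row_mx (const_mx 2 - e_ R j) (const_mx 2 - e_ R j)
  | _ => row_mx 0 (e_ R j)
  end.

Definition labA (k : nat) (j : 'I_k) : label k := (inord 0, j).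
Definition labB (k : nat) (j : 'I_k) : label k := (inord 1, j).
Definition labC (k : nat) (j : 'I_k) : label k := (inord 2, j).

Definition AuC (k : nat) : {set label k} := [set l | val l.1 != 1%N].

Definition good (k : nat) (S : {set label k}) : bool :=
  [&& #|S| == (2 * k)%N,
      [forall j : 'I_k, ~~ ([set labA j; labB j; labC j] \subset S)]
    & S != AuC k].

(* Main.v *)
Require Import Defs.
From HB Require Import structures.
From mathcomp Require Import all_boot all_order all_algebra.
Import GRing.Theory Num.Theory.
Local Open Scope ring_scope.

Lemma reduce (R : realFieldType) (k : nat) (S : {set label k}) (l0 : label k) :
  #|S| = (2 * k)%N ->
  (forall f : label k -> R, (forall l, l \notin S -> f l = 0) ->
     \sum_l f l *: point R l = 0 -> forall l, f l = 0) ->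
  basis_of fullv [seq point R x | x <- enum S].
Proof.
move=> cS core.
set s := enum S; set X := [seq point R x | x <- s].
have sX : size X = #|S| by rewrite size_map -cardE.
rewrite basisEfree subvf dimvf /= dim_matrix sX cS.
apply/andP; split; last by rewrite mul1r mul2n addnn.
have us : uniq s by apply: enum_uniq.
change (free (in_tuple X)); apply/freeP => kc H i.
pose f l := \sum_(j < size X | nth l0 s j == l) kc j.
have Xj : forall j : 'I_(size X), X`_j = point R (nth l0 s j).
  move=> j; rewrite (nth_map l0) //; by rewrite -(size_map (@point R k)).
have Hf : \sum_l f l *: point R l = 0.
  transitivity (\sum_(j < size X) kc j *: X`_j); last exact: H.
  under eq_bigr do rewrite /f scaler_suml big_mkcond.
  rewrite exchange_big /=; apply: eq_bigr => j _; rewrite -big_mkcond /=.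
  by rewrite (big_pred1 (nth l0 s j)) ?Xj // => l; rewrite eq_sym.
have fS : forall l, l \notin S -> f l = 0.
  move=> l lS; rewrite /f big1 // => j /eqP ej.
  case/negP: lS; rewrite -ej.
  have : nth l0 s j \in s by apply: mem_nth; rewrite -(size_map (@point R k)).
  by rewrite /s mem_enum.
have := core f fS Hf (nth l0 s i); rewrite /f (big_pred1 i) // => j.
apply/idP/idP => [/eqP|/eqP -> //]; move/eqP; rewrite nth_uniq //.
- by rewrite -(size_map (@point R k)).
- by rewrite -(size_map (@point R k)).
Qed.
From mathcomp Require Import ring lra zify.

Lemma label_cases k (l : label k) : [\/ l = labA l.2, l = labB l.2 | l = labC l.2].
Proof.
case: l => -[[|[|[|x]]] hx] j //=; [apply: Or31 | apply: Or32 | apply: Or33];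
  by congr (_, _); apply: val_inj; rewrite /= inordK.
Qed.

Lemma card_label k (S : {set label k}) : #|S| =
  (\sum_(j < k) ((labA j \in S) + (labB j \in S) + (labC j \in S)))%N.
Proof.
rewrite -sum1_card big_mkcond /=.
transitivity (\sum_(x : 'I_3) \sum_(j : 'I_k) ((x, j) \in S : nat))%N.
  by rewrite pair_big; apply: eq_bigr => -[x j] _; case: ifP.
rewrite !big_ord_recr big_ord0 /= add0n -!big_split /=.
apply: eq_bigr => j _.
have E : forall m (hm : (m < 3)%N), Ordinal hm = inord m :> 'I_3.
  by move=> m hm; apply: val_inj; rewrite /= inordK.
rewrite /labA /labB /labC.
rewrite (_ : widen_ord _ (widen_ord _ ord_max) = inord 0); last by apply: val_inj; rewrite /= inordK.
rewrite (_ : widen_ord _ ord_max = inord 1); last by apply: val_inj; rewrite /= inordK.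
by rewrite (_ : ord_max = inord 2); last by apply: val_inj; rewrite /= inordK.
Qed.

Section Core.
Variables (R : realFieldType) (k : nat).

Lemma sum_label (F : label k -> R) : \sum_(l : label k) F l =
  \sum_j F (labA j) + \sum_j F (labB j) + \sum_j F (labC j).
Proof.
transitivity (\sum_(x : 'I_3) \sum_(j : 'I_k) F (x, j)).
  by rewrite pair_big; apply: eq_bigr => -[x j].
rewrite !big_ord_recr big_ord0 /= add0r.
congr (_ + _ + _); apply: eq_bigr => j _; congr (F (_, j)); apply: val_inj;
  by rewrite /= inordK.
Qed.

Let c : R := (2 * (2 * k - 1)%N%:R)^-1.

Lemma ptA j i : (point R (labA j)) 0 (lshift k i) = (j == i)%:R /\
                (point R (labA j)) 0 (rshift k i) = 0.
Proof.
rewrite /point /labA /= inordK //=.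
by rewrite row_mxEl row_mxEr !mxE /= eq_sym.
Qed.

Lemma ptB j i : (point R (labB j)) 0 (lshift k i) = c * (2 - (j == i)%:R) /\
                (point R (labB j)) 0 (rshift k i) = c * (2 - (j == i)%:R).
Proof.
rewrite /point /labB /= inordK //=.
by rewrite !mxE (unsplitK (inl i)) (unsplitK (inr i)) !mxE /= eq_sym.
Qed.

Lemma ptC j i : (point R (labC j)) 0 (lshift k i) = 0 /\
                (point R (labC j)) 0 (rshift k i) = (j == i)%:R.
Proof.
rewrite /point /labC /= inordK //=.
by rewrite row_mxEl row_mxEr !mxE /= eq_sym.
Qed.


Lemma sum_delta (F : 'I_k -> R) i : \sum_j F j * (j == i)%:R = F i.
Proof.
rewrite (bigD1 i) //= eqxx mulr1 big1 ?addr0 // => j /negbTE ->; by rewrite mulr0.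
Qed.

Lemma c_neq0 : (2 <= k)%N -> c != 0.
Proof.
move=> hk; rewrite /c invr_eq0 mulf_neq0 ?pnatr_eq0 //.
lia.
Qed.

Lemma core (S : {set label k}) : (2 <= k)%N -> good S ->
  forall f : label k -> R, (forall l, l \notin S -> f l = 0) ->
     \sum_l f l *: point R l = 0 -> forall l, f l = 0.
Proof.
move=> hk /and3P[/eqP cS /forallP notri neqS] f fS H0.
set beta := \sum_j f (labB j).
have eqLR : forall i, f (labA i) = c * (f (labB i) - 2 * beta) /\
                      f (labC i) = c * (f (labB i) - 2 * beta).
  move=> i.
  have HB : \sum_j f (labB j) * (c * (2 - (j == i)%:R)) = c * (2 * beta - f (labB i)).
    transitivity (\sum_j (c * 2 * f (labB j) - c * (f (labB j) * (j == i)%:R))).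
      by apply: eq_bigr => j _; ring.
    by rewrite sumrB -!mulr_sumr sum_delta /beta; ring.
  have := congr1 (fun M : 'rV[R]_(k + k) => M 0 (lshift k i)) H0.
  have := congr1 (fun M : 'rV[R]_(k + k) => M 0 (rshift k i)) H0.
  rewrite /= !summxE.
  under eq_bigr => l _ do rewrite mxE.
  rewrite sum_label.
  under eq_bigr => j _ do rewrite (proj2 (ptA j i)).
  under [\sum_j f (labB j) * _]eq_bigr => j _ do rewrite (proj2 (ptB j i)).
  under [\sum_j f (labC j) * _]eq_bigr => j _ do rewrite (proj2 (ptC j i)).
  rewrite sum_delta HB mxE => ER.
  under eq_bigr => l _ do rewrite mxE.
  rewrite sum_label.
  under eq_bigr => j _ do rewrite (proj1 (ptA j i)).
  under [\sum_j f (labB j) * _]eq_bigr => j _ do rewrite (proj1 (ptB j i)).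
  under [\sum_j f (labC j) * _]eq_bigr => j _ do rewrite (proj1 (ptC j i)).
  rewrite sum_delta HB mxE => EL.
  rewrite big1 ?add0r in ER; last by move=> j _; rewrite mulr0.
  rewrite big1 ?addr0 in EL; last by move=> j _; rewrite mulr0.
  split.
    transitivity (f (labA i) + c*(2*beta - f (labB i)) - c*(2*beta - f (labB i))); first ring.
    by rewrite EL; ring.
  transitivity (c*(2*beta - f (labB i)) + f (labC i) - c*(2*beta - f (labB i))); first ring.
  by rewrite ER; ring.
have cn0 := c_neq0 hk.
have noBA : forall j, ~~ [&& labA j \in S, labB j \in S & labC j \in S].
  move=> j; apply: contra (notri j) => /and3P[hA hB hC].
  by apply/subsetP => x; rewrite !inE => /orP[/orP[/eqP->|/eqP->]|/eqP->].
have keyB : forall j, f (labB j) = (labB j \in S)%:R * (2 * beta).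
  move=> j; case: (boolP (labB j \in S)) => hB; last by rewrite fS // mul0r.
  rewrite mul1r.
  have : c * (f (labB j) - 2 * beta) = 0.
    have := noBA j; rewrite hB /=.
    case: (boolP (labA j \in S)) => hA /=.
      by move=> hC; rewrite -(proj2 (eqLR j)) fS.
    by move=> _; rewrite -(proj1 (eqLR j)) fS.
  by move/eqP; rewrite mulf_eq0 (negbTE cn0) /= subr_eq0 => /eqP.
have [j0 hj0] : exists j0, labB j0 \in S.
  case: (pickP (fun j => labB j \in S)) => [j0 h|none]; first by exists j0.
  exfalso.
  pose n j := ((labA j \in S) + (labB j \in S) + (labC j \in S))%N.
  have hle : forall j, (n j <= 2)%N.
    move=> j; move: (noBA j); rewrite /n.
    by case: (labA j \in S); case: (labB j \in S); case: (labC j \in S).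
  have hs : (\sum_j (2 - n j) == 0)%N.
    have := cS; rewrite card_label => cs.
    rewrite -(eqn_add2r (\sum_j n j)) -big_split /= add0n.
    rewrite (eq_bigr (fun _ => 2%N)); last by move=> j _; rewrite subnK.
    by rewrite sum_nat_const card_ord mulnC -cs.
  move: hs; rewrite sum_nat_eq0 => /forallP hs.
  have hAC : forall j, (labA j \in S) && (labC j \in S).
    move=> j; move: (hs j) (none j); rewrite /n /=.
    by case: (labA j \in S); case: (labB j \in S); case: (labC j \in S).
  apply: (negP neqS); apply/eqP/setP => l; rewrite inE.
  case: (label_cases _ l) => ->; rewrite /= inordK //; rewrite ?none //;
    by case/andP: (hAC (snd l)).
have beta0 : beta = 0.
  have : beta = (\sum_j (labB j \in S : nat))%:R * (2 * beta).
    by rewrite {1}/beta natr_sum mulr_suml; apply: eq_bigr => j _; rewrite keyB.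
  have : (1 <= \sum_j (labB j \in S : nat))%N.
    by rewrite (bigD1 j0) //= hj0.
  move: (\sum_j _)%N => m hm.
  have hm' : 1 <= m%:R :> R by rewrite ler1n.
  move=> E.
  have H2 : beta * (2 * m%:R - 1) = 0.
    transitivity (m%:R * (2 * beta) - beta); first ring.
    by rewrite -E subrr.
  move/eqP: H2; rewrite mulf_eq0 => /orP[/eqP //|].
  by move/eqP => H3; lra.
have bz : forall j, f (labB j) = 0 by move=> j; rewrite keyB beta0 !mulr0.
move=> l; case: (label_cases _ l) => ->.
- by rewrite (proj1 (eqLR _)) bz beta0 mulr0 subr0 mulr0.
- by rewrite bz.
- by rewrite (proj2 (eqLR _)) bz beta0 mulr0 subr0 mulr0.
Qed.

End Core.

Theorem mainTheorem6 (R : realFieldType) (k : nat) (hk : (2 <= k)%N)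
  (S : {set label k}) :
  good S -> basis_of fullv [seq point R x | x <- enum S].
Proof.
move=> gS.
have l0 : label k by exact: (inord 0, Ordinal (leq_trans (isT : (0 < 2)%N) hk)).
apply: (@reduce R k S l0).
  by case/and3P: gS => /eqP.
exact (@core R k S hk gS).
Qed.
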